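(* Let $\mathfrak g$ be a Lie algebra in which every abelian ideal is central. Then: (a) every nilpotent ideal $\mathfrak n$ of $\mathfrak g$ satisfies $C^2(\mathfrak n)\subseteq\mathfrak z(\mathfrak g)$ and $C^3(\mathfrak n)=\{0\}$; (b) if $\mathfrak r$ is a solvable ideal of $\mathfrak g$ and $n\in\mathbb N_0$ is maximal with $D^n(\mathfrak r)\neq\{0\}$, then $D^n(\mathfrak r)$ is central in $\mathfrak g$; (c) the center of the Lie algebra $\mathrm{ad}\,\mathfrak g$ is trivial, $\mathfrak z(\mathrm{ad}\,\mathfrak g)=\{0\}$; (d) if $\mathfrak g$ is nilpotent, then $\mathfrak g$ is abelian.
   Context: For a Lie algebra $\mathfrak h$: the derived series is $D^0(\mathfrak h)=\mathfrak h$, $D^{n+1}(\mathfrak h)=[D^n(\mathfrak h),D^n(\mathfrak h)]$; the descending central series is $C^1(\mathfrak h)=\mathfrak h$, $C^{n+1}(\mathfrak h)=[\mathfrak h,C^n(\mathfrak h)]$. $\mathfrak z(\mathfrak g)$ denotes the center of $\mathfrak g$. *)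

(* Defs.v *)
From HB Require Import structures.
From mathcomp Require Import all_boot all_algebra.
Set Implicit Arguments. Unset Strict Implicit. Unset Printing Implicit Defensive.
Import GRing.Theory.
Local Open Scope ring_scope.

Definition is_lie (K : fieldType) (V : lmodType K) (br : V -> V -> V) : Prop :=
  [/\ (forall a x y z, br (a *: x + y) z = a *: br x z + br y z),
      (forall a x y z, br x (a *: y + z) = a *: br x y + br x z),
      (forall x, br x x = 0) &
      (forall x y z, br x (br y z) + br y (br z x) + br z (br x y) = 0)].

Definition subspace (K : fieldType) (V : lmodType K) (S : V -> Prop) : Prop :=
  [/\ S 0, (forall x y, S x -> S y -> S (x + y)) &
      (forall (a : K) x, S x -> S (a *: x))].

Definition sub_set (V : Type) (A B : V -> Prop) : Prop := forall x, A x -> B x.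

Definition is_zero (V : zmodType) (S : V -> Prop) : Prop := forall x, S x <-> x = 0.

Definition ideal (K : fieldType) (V : lmodType K) (br : V -> V -> V) (I : V -> Prop) : Prop :=
  subspace I /\ (forall x y, I y -> I (br x y)).

(* [A, B] = linear span of {br a b | a in A, b in B} (smallest subspace containing them) *)
Definition brsub (K : fieldType) (V : lmodType K) (br : V -> V -> V)
    (A B : V -> Prop) : V -> Prop :=
  fun v => forall S : V -> Prop, subspace S ->
    (forall a b, A a -> B b -> S (br a b)) -> S v.

Fixpoint derived (K : fieldType) (V : lmodType K) (br : V -> V -> V)
    (h : V -> Prop) (n : nat) : V -> Prop :=
  match n with
  | 0 => h
  | n'.+1 => brsub br (derived br h n') (derived br h n')
  end.

(* descending central series: C^1 h = h, C^(n+1) h = [h, C^n h]; we set C^0 h = h too *)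
Fixpoint lcs (K : fieldType) (V : lmodType K) (br : V -> V -> V)
    (h : V -> Prop) (n : nat) : V -> Prop :=
  match n with
  | 0 | 1 => h
  | n'.+1 => brsub br h (lcs br h n')
  end.

Definition center (K : fieldType) (V : lmodType K) (br : V -> V -> V) : V -> Prop :=
  fun z => forall y, br z y = 0.

Definition abelian_sub (V : zmodType) (br : V -> V -> V) (I : V -> Prop) : Prop :=
  forall a b, I a -> I b -> br a b = 0.

Definition solvable_sub (K : fieldType) (V : lmodType K) (br : V -> V -> V)
    (h : V -> Prop) : Prop := exists n, is_zero (derived br h n).

Definition nilpotent_sub (K : fieldType) (V : lmodType K) (br : V -> V -> V)
    (h : V -> Prop) : Prop := exists n, (1 <= n)%N /\ is_zero (lcs br h n).

Definition ad (V : Type) (br : V -> V -> V) (x : V) : V -> V := br x.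

(* center of ad g (the Lie algebra of the maps ad x, with commutator bracket) is {0} *)
Definition ad_center_trivial (K : fieldType) (V : lmodType K) (br : V -> V -> V) : Prop :=
  forall x : V,
    (forall y : V, (fun v => ad br x (ad br y v) - ad br y (ad br x v)) = (fun _ => 0)) ->
    ad br x = (fun _ => 0).

(* Main.v *)
Require Import Defs.
From HB Require Import structures.
From mathcomp Require Import all_boot all_algebra.
From Stdlib Require Import Classical FunctionalExtensionality.
Set Implicit Arguments. Unset Strict Implicit. Unset Printing Implicit Defensive.
Import GRing.Theory.
Local Open Scope ring_scope.

Section L.
Variables (K : fieldType) (V : lmodType K) (br : V -> V -> V) (hL : is_lie br).

Lemma brDZl a x y z : br (a*:x+y) z = a *: br x z + br y z.
Proof. by case: hL. Qed.
Lemma brDZr a x y z : br x (a*:y+z) = a *: br x y + br x z.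
Proof. by case: hL. Qed.
Lemma brxx x : br x x = 0.
Proof. by case: hL. Qed.
Lemma jac x y z : br x (br y z) + br y (br z x) + br z (br x y) = 0.
Proof. by case: hL. Qed.

Lemma br0l z : br 0 z = 0.
Proof.
have := brDZl 1 0 0 z; rewrite !scale1r addr0 => h.
by apply: (addrI (br 0 z)); rewrite addr0 -h.
Qed.
Lemma br0r z : br z 0 = 0.
Proof.
have := brDZr 1 z 0 0; rewrite !scale1r addr0 => h.
by apply: (addrI (br z 0)); rewrite addr0 -h.
Qed.
Lemma brDl x y z : br (x+y) z = br x z + br y z.
Proof. by have := brDZl 1 x y z; rewrite !scale1r. Qed.
Lemma brDr x y z : br z (x+y) = br z x + br z y.
Proof. by have := brDZr 1 z x y; rewrite !scale1r. Qed.
Lemma brZl a x z : br (a*:x) z = a *: br x z.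
Proof. by have := brDZl a x 0 z; rewrite !addr0 br0l addr0. Qed.
Lemma brZr a x z : br z (a*:x) = a *: br z x.
Proof. by have := brDZr a z x 0; rewrite !addr0 br0r addr0. Qed.
Lemma brNl x z : br (-x) z = - br x z.
Proof. by rewrite -scaleN1r brZl scaleN1r. Qed.
Lemma brNr x z : br z (-x) = - br z x.
Proof. by rewrite -scaleN1r brZr scaleN1r. Qed.
Lemma anti x y : br x y = - br y x.
Proof.
have := brxx (x+y); rewrite brDl !brDr !brxx add0r addr0.
by move/eqP; rewrite addr_eq0 => /eqP.
Qed.

Lemma jac2 x a b : br x (br a b) = br a (br x b) + br (br x a) b.
Proof.
have := jac x a b; move/eqP; rewrite -addrA addr_eq0 => /eqP ->.
rewrite opprD (anti b (br x a)) opprK (anti b x) brNr opprK addrC.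
by [].
Qed.

Lemma adcomm x y v : br x (br y v) - br y (br x v) = br (br x y) v.
Proof. by rewrite jac2 addrAC subrr add0r. Qed.

Section Sub.
Variable S : V -> Prop.
Hypothesis hS : subspace S.
Lemma sub0 : S 0. Proof. by case: hS. Qed.
Lemma subD x y : S x -> S y -> S (x + y). Proof. by case: hS => _ h _; apply: h. Qed.
Lemma subZ a x : S x -> S (a *: x). Proof. by case: hS => _ _ h; apply: h. Qed.
Lemma subN x : S x -> S (- x). Proof. by move=> h; rewrite -scaleN1r; apply: subZ. Qed.
End Sub.

Lemma brsub_sub A B : subspace (brsub br A B).
Proof.
split.
- by move=> S hS _; apply: sub0.
- by move=> x y hx hy S hS h; apply: subD => //; [apply: hx | apply: hy].
- by move=> a x hx S hS h; apply: subZ => //; apply: hx.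
Qed.

Lemma brsub_gen (A B : V -> Prop) a b : A a -> B b -> brsub br A B (br a b).
Proof. by move=> ha hb S _ h; apply: h. Qed.

Lemma brsub_mono (A B A' B' : V -> Prop) : sub_set A A' -> sub_set B B' ->
  sub_set (brsub br A B) (brsub br A' B').
Proof.
move=> hA hB v hv; apply: (hv _ (brsub_sub _ _)) => a b ha hb.
by apply: brsub_gen; [apply: hA | apply: hB].
Qed.

Lemma span_r (A B S : V -> Prop) y x : subspace S ->
  (forall a b, A a -> B b -> S (br y (br a b))) -> brsub br A B x -> S (br y x).
Proof.
move=> hS h hx.
have hT : subspace (fun v => S (br y v)).
  split.
  - by rewrite br0r; apply: sub0.
  - by move=> u w hu hw; rewrite brDr; apply: subD.
  - by move=> a u hu; rewrite brZr; apply: subZ.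
exact: (hx _ hT h).
Qed.

Lemma span_l (A B S : V -> Prop) y x : subspace S ->
  (forall a b, A a -> B b -> S (br (br a b) y)) -> brsub br A B x -> S (br x y).
Proof.
move=> hS h hx.
have hT : subspace (fun v => S (br v y)).
  split.
  - by rewrite br0l; apply: sub0.
  - by move=> u w hu hw; rewrite brDl; apply: subD.
  - by move=> a u hu; rewrite brZl; apply: subZ.
exact: (hx _ hT h).
Qed.

Lemma brsub_ideal A B : ideal br A -> ideal br B -> ideal br (brsub br A B).
Proof.
move=> [hA iA] [hB iB]; split; first exact: brsub_sub.
move=> x y hy; apply: (span_r (brsub_sub A B)) hy => a b ha hb.
rewrite jac2; apply: (subD (brsub_sub A B)).
- by apply: brsub_gen => //; apply: iB.
- by apply: brsub_gen => //; apply: iA.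
Qed.

Lemma zero_sub : subspace (fun x : V => x = 0).
Proof.
split => //; first by move=> x y -> ->; rewrite addr0.
by move=> a x ->; rewrite scaler0.
Qed.

Lemma is_zeroP (S : V -> Prop) : subspace S -> sub_set S (fun x => x = 0) -> is_zero S.
Proof. by move=> hS h x; split; [apply: h | move=> ->; apply: sub0]. Qed.

Lemma central_zero (A B : V -> Prop) : sub_set B (center br) ->
  sub_set (brsub br A B) (fun x => x = 0).
Proof.
move=> h v hv; apply: (hv _ zero_sub) => a b _ hb.
by rewrite anti (h b hb a) oppr0.
Qed.

Section Lcs.
Variable N : V -> Prop.
Hypothesis hN : ideal br N.

Lemma lcs_ideal k : ideal br (lcs br N k).
Proof.
elim: k => [|[|k] IH] //=.
exact: brsub_ideal.
Qed.

Lemma lcs_dec k : sub_set (lcs br N k.+2) (lcs br N k.+1).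
Proof.
elim: k => [|k IH].
- move=> v hv; apply: (hv _ (proj1 hN)).
  by move=> a b _ hb; case: hN => _; apply.
- by apply: brsub_mono.
Qed.

Lemma lcs_decn d m : sub_set (lcs br N (d + m.+1)) (lcs br N m.+1).
Proof.
elim: d => [|d IH] //.
move=> v hv; apply: IH; rewrite addnS in hv *; rewrite addSn in hv.
rewrite addnS.
exact: lcs_dec hv.
Qed.

Lemma lcs_key j u w : lcs br N 2 u -> lcs br N j.+1 w -> lcs br N j.+3 (br u w).
Proof.
move=> hu hw.
apply: (span_l (brsub_sub _ _)) hu => a b ha hb.
have hS := brsub_sub N (lcs br N j.+2).
have e1 : - br a (br w b) = br a (br b w) by rewrite (anti w b) brNr opprK.
have e2 : - br (br w a) b = - br b (br a w).
  by rewrite (anti (br w a) b) (anti w a) !brNr !opprK.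
rewrite anti jac2 opprD e1 e2; apply: (subD hS).
- by apply: brsub_gen => //; apply: brsub_gen.
- apply: (subN hS); apply: brsub_gen => //; exact: brsub_gen.
Qed.

Hypothesis hab : forall I : V -> Prop, ideal br I -> abelian_sub br I -> sub_set I (center br).

Lemma lcs_step i : is_zero (lcs br N i.+4) -> is_zero (lcs br N i.+3).
Proof.
move=> hz; apply: is_zeroP; first by case: (lcs_ideal i.+3).
have hc : sub_set (lcs br N i.+2) (center br).
  apply: hab; first exact: lcs_ideal.
  move=> u w hu hw; apply/hz.
  apply: lcs_key => //.
  have hd := @lcs_decn i 1; rewrite addn2 in hd; exact: hd _ hu.
exact: central_zero.
Qed.

Lemma lcs3 d : is_zero (lcs br N d.+3) -> is_zero (lcs br N 3).
Proof.
elim: d => [|d IH] // h; apply: IH; exact: lcs_step.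
Qed.

End Lcs.
End L.

Theorem lemma1p4 (K : fieldType) (V : lmodType K) (br : V -> V -> V)
  (hL : is_lie br)
  (hab : forall I : V -> Prop, ideal br I -> abelian_sub br I -> sub_set I (center br)) :
  (* (a) *)
  (forall n : V -> Prop, ideal br n -> nilpotent_sub br n ->
     sub_set (lcs br n 2) (center br) /\ is_zero (lcs br n 3)) /\
  (* (b) *)
  (forall (r : V -> Prop) (n : nat), ideal br r -> solvable_sub br r ->
     ~ is_zero (derived br r n) ->
     (forall m : nat, ~ is_zero (derived br r m) -> (m <= n)%N) ->
     sub_set (derived br r n) (center br)) /\
  (* (c) *)
  ad_center_trivial br /\
  (* (d) *)
  (nilpotent_sub br (fun _ => True) -> forall x y : V, br x y = 0%R).
Proof.
have partA : forall n : V -> Prop, ideal br n -> nilpotent_sub br n ->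
     sub_set (lcs br n 2) (center br) /\ is_zero (lcs br n 3).
  move=> N hN [[|m] [hm hz]] //.
  have h3 : is_zero (lcs br N 3).
    apply: (lcs3 hL hN hab (d := m.+1)).
    apply: is_zeroP; first by case: (lcs_ideal hL hN m.+4).
    move=> v hv; apply/hz; have hd := lcs_decn hN (d:=3) (m:=m).
    by rewrite !addSn add0n in hd; apply: hd.
  split => //.
  apply: hab; first exact: lcs_ideal.
  move=> u w hu hw; apply/h3.
  apply: (lcs_dec hN (k:=2)); exact: lcs_key.
have partC : ad_center_trivial br.
  move=> x H.
  have hxc : forall y, center br (br x y).
    move=> y v; rewrite -(adcomm hL).
    by have := f_equal (fun f => f v) (H y).
  pose I := fun v => exists a z, center br z /\ v = a *: x + z.
  have hI : ideal br I.
    split; first split.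
    - by exists 0, 0; split; [move=> y; apply: br0l | rewrite scale0r addr0].
    - move=> u w [a [z [hz ->]]] [b [z' [hz' ->]]].
      exists (a + b), (z + z'); split.
        by move=> y; rewrite (brDl hL) hz hz' addr0.
      by rewrite scalerDl addrACA.
    - move=> c u [a [z [hz ->]]]; exists (c * a), (c *: z); split.
        by move=> y; rewrite (brZl hL) hz scaler0.
      by rewrite scalerDr scalerA.
    - move=> w u [a [z [hz ->]]]; exists 0, (br w (a *: x + z)); split.
        by move=> y; rewrite (brDr hL) (brZr hL) (anti hL w x) (anti hL w z) hz oppr0
          addr0 (brZl hL) (brNl hL) hxc oppr0 scaler0.
      by rewrite scale0r add0r.
  have hIab : abelian_sub br I.
    move=> u w [a [z [hz ->]]] [b [z' [hz' ->]]].
    rewrite (brDl hL) (brZl hL) hz addr0 (brDr hL) (brZr hL) (brxx hL) scaler0 add0r.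
    by rewrite (anti hL x z') hz' oppr0 scaler0.
  have hx : center br x.
    by apply: (hab I hI hIab x); exists 1, 0; split; [move=> y; apply: br0l | rewrite scale1r addr0].
  by apply: functional_extensionality => y; apply: hx.
split => //; split; last split => //.
- move=> r n hr _ hn hmax.
  have hz : is_zero (derived br r n.+1).
    apply: NNPP => hnz; have := hmax _ hnz; by rewrite ltnn.
  have hid : forall k, ideal br (derived br r k).
    elim=> [|k IH] //=; exact: brsub_ideal.
  apply: hab; first exact: hid.
  by move=> a b ha hb; apply/hz; apply: brsub_gen.
- move=> hnil x y.
  have hT : ideal br (fun _ : V => True) by [].
  have [h2 _] := partA _ hT hnil.
  have hx : ad br x = (fun _ => 0).
    apply: partC => z; apply: functional_extensionality => v.
    rewrite /ad (adcomm hL).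
    by apply: (h2 (br x z)); apply: brsub_gen.
  by have := f_equal (fun f => f y) hx.
Qed.
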